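(* Let $G=(V,E)$ be a strongly connected digraph and $s\in V$. For all $v,w\in V$: if $v \leftrightarrow_{\mathrm{2e}} w$ then $T(v)=T(w)$ and $T^R(v)=T^R(w)$.
   Context: For a digraph $G=(V,E)$ and $s\in V$ with every vertex reachable from $s$, $G(s)$ is the flow graph with start vertex $s$; $u$ dominates $w$ if every path from $s$ to $w$ contains $u$; the dominator tree $D(s)$ is the rooted tree on $V$ with root $s$ in which $u$ is an ancestor of $w$ iff $u$ dominates $w$; $d(w)$ is the parent of $w\neq s$. An edge $(u,w)$ is a bridge of $G(s)$ if every path from $s$ to $w$ contains it (then $u=d(w)$). A vertex $w\neq s$ is marked if $(d(w),w)$ is a bridge of $G(s)$. Deleting from $D(s)$ all edges $(d(w),w)$ with $w$ marked decomposes $D(s)$ into a forest of subtrees, each rooted at $s$ or at a marked vertex; $T(v)$ denotes the subtree containing $v$, and $r_v$ its root. $G^R$ is $G$ with all edges reversed; $D^R(s)$ is the dominator tree of $G^R(s)$, marked vertices of $D^R(s)$ are defined via bridges of $G^R(s)$, and $T^R(v)$ is the subtree containing $v$ in the analogous decomposition of $D^R(s)$. For vertices $v,w$, $v \leftrightarrow_{\mathrm{2e}} w$ means $v=w$, or there are two edge-disjoint directed paths from $v$ to $w$ and two from $w$ to $v$. *)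

(* Defs.v *)
(* Digraphs are multigraphs: vertex type V, edge type Ed,
   with source/target maps. *)
From mathcomp Require Import all_boot.
From Stdlib Require Import Relation_Operators.
Set Implicit Arguments. Unset Strict Implicit. Unset Printing Implicit Defensive.

Section Digraph.
Variables (V Ed : finType) (src tgt : Ed -> V).

Fixpoint walk (u : V) (p : seq Ed) (w : V) : Prop :=
  match p with
  | [::] => u = w
  | e :: p' => src e = u /\ walk (tgt e) p' w
  end.

Definition walk_verts (u : V) (p : seq Ed) : seq V := u :: map tgt p.

Definition strongly_connected : Prop := forall u w, exists p, walk u p w.

Definition dominates (s u w : V) : Prop :=
  forall p, walk s p w -> u \in walk_verts s p.

(* d(w) = u: u is the parent of w in the dominator tree D(s),
   i.e. the immediate dominator of w *)
Definition idom (s w u : V) : Prop :=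
  w <> s /\ u <> w /\ dominates s u w /\
  (forall x, x <> w -> dominates s x w -> dominates s x u).

Definition bridge (s : V) (e : Ed) : Prop :=
  forall p, walk s p (tgt e) -> e \in p.

Definition marked (s w : V) : Prop :=
  w <> s /\ exists u e, idom s w u /\ src e = u /\ tgt e = w /\ bridge s e.

Definition kept_tree_edge (s u w : V) : Prop := idom s w u /\ ~ marked s w.

(* T(v) = T(w): v and w lie in the same subtree of the forest obtained
   from D(s) by deleting the edges (d(w), w) with w marked *)
Definition same_subtree (s v w : V) : Prop :=
  clos_refl_sym_trans V (kept_tree_edge s) v w.

Definition edge_disjoint (p q : seq Ed) : Prop := forall e, e \in p -> e \notin q.

Definition two_edge_paths (v w : V) : Prop :=
  exists p q, walk v p w /\ walk v q w /\ edge_disjoint p q.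

Definition two_edge_conn (v w : V) : Prop :=
  v = w \/ (two_edge_paths v w /\ two_edge_paths w v).

End Digraph.

(* Main.v *)
Require Import Defs.
From mathcomp Require Import all_boot.
From Stdlib Require Import Relation_Operators Classical.
Set Implicit Arguments. Unset Strict Implicit. Unset Printing Implicit Defensive.

Lemma walk_cat (V Ed : finType) (src tgt : Ed -> V) a p b q c :
  walk src tgt a p b -> walk src tgt b q c -> walk src tgt a (p ++ q) c.
Proof.
elim: p a => [|e p IH] a /=; first by move=> ->.
by move=> [He Hw] Hq; split; [|exact: IH].
Qed.

Lemma walk_end (V Ed : finType) (src tgt : Ed -> V) a p b :
  walk src tgt a p b -> b \in walk_verts tgt a p.
Proof.
elim: p a => [|e p IH] a /=; first by move=> ->; rewrite /walk_verts mem_head.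
move=> [_ Hw]; have := IH _ Hw; rewrite /walk_verts /= => H.
by rewrite in_cons H orbT.
Qed.

Lemma walk_split (V Ed : finType) (src tgt : Ed -> V) a p b u :
  walk src tgt a p b -> u \in walk_verts tgt a p ->
  exists p1 p2, p = p1 ++ p2 /\ walk src tgt a p1 u /\ walk src tgt u p2 b.
Proof.
elim: p a => [|e p IH] a /=.
  move=> ->; rewrite /walk_verts /= inE => /eqP ->.
  by exists [::], [::]; repeat split.
move=> [He Hw]; rewrite /walk_verts /= in_cons => /orP [/eqP -> | Hu].
  by exists [::], (e :: p); repeat split.
have [p1 [p2 [Hp [H1 H2]]]] := IH _ Hw Hu.
by exists (e :: p1), p2; rewrite Hp; repeat split.
Qed.

Lemma walk_lastP (V Ed : finType) (src tgt : Ed -> V) (P : V -> Prop) a p b :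
  walk src tgt a p b ->
  exists p1 p2 u, p = p1 ++ p2 /\ walk src tgt a p1 u /\ walk src tgt u p2 b /\
    (P u \/ (p1 = [::] /\ u = a)) /\ (forall x, x \in map tgt p2 -> ~ P x).
Proof.
elim: p a => [|e p IH] a /=.
  move=> ->; exists [::], [::], b.
  split; first by []. split; first by []. split; first by [].
  split; first by right. by move=> x; rewrite in_nil.
move=> [He Hw].
have [p1 [p2 [u [Hp [H1 [H2 [Hu Hn]]]]]]] := IH _ Hw.
case: (classic (P u)) => Pu.
  exists (e :: p1), p2, u; rewrite Hp; split; first by [].
  split; first by split. split; first by []. split; first by left. exact: Hn.
case: Hu => [//|[E1 E2]].
subst p1 u.
exists [::], (e :: p), a; split; first by []. split; first by []. split; first by split.
split; first by right.
move=> x; rewrite /= in_cons => /orP [/eqP -> //|Hx]. rewrite Hp /= in Hx. exact: Hn.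
Qed.

Lemma walk_first (V Ed : finType) (src tgt : Ed -> V) a p b :
  walk src tgt a p b -> exists p1, walk src tgt a p1 b /\
  forall q1 q2, p1 = q1 ++ q2 -> q2 <> [::] -> b \notin walk_verts tgt a q1.
Proof.
elim: p a => [|e p IH] a Hw.
  exists [::]; split; first by [].
  by move=> [|x q1] q2 //= <- /(_ erefl) [].
case: (eqVneq a b) => [<-|Hab].
  exists [::]; split; first by [].
  by move=> [|x q1] q2 //= <- /(_ erefl) [].
case: Hw => He Hw.
have [p1 [H1 H2]] := IH _ Hw.
exists (e :: p1); split; first by split.
move=> [|e' q1] q2 /=.
  by move=> _ _; rewrite /walk_verts inE eq_sym.
case=> <- Hp Hq. rewrite /walk_verts /= in_cons negb_or; apply/andP; split.
  by rewrite eq_sym.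
exact: (H2 q1 q2 Hp Hq).
Qed.

Lemma dom_trans (V Ed : finType) (src tgt : Ed -> V) s x u v :
  dominates src tgt s x u -> dominates src tgt s u v -> dominates src tgt s x v.
Proof.
move=> Hxu Huv p Hp.
have [p1 [p2 [E [H1 H2]]]] := walk_split Hp (Huv p Hp).
have := Hxu _ H1; rewrite E /walk_verts map_cat /= !in_cons mem_cat.
by case/orP => [->|->] //; rewrite orbT.
Qed.

Lemma dom_refl (V Ed : finType) (src tgt : Ed -> V) s v : dominates src tgt s v v.
Proof. by move=> p Hp; apply: walk_end Hp. Qed.

Lemma dom_from_s (V Ed : finType) (src tgt : Ed -> V) s v : dominates src tgt s s v.
Proof. by move=> p _; rewrite /walk_verts mem_head. Qed.

Lemma dom_s (V Ed : finType) (src tgt : Ed -> V) s x :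
  dominates src tgt s x s -> x = s.
Proof. move=> H; apply/eqP; have := H [::] erefl; by rewrite /walk_verts inE. Qed.

Lemma idom_ex (V Ed : finType) (src tgt : Ed -> V) s v p :
  v <> s -> walk src tgt s p v ->
  exists u p1, idom src tgt s v u /\ walk src tgt s p1 u /\ size p1 < size p.
Proof.
move=> Hvs Hp.
have [p1 [p2 [u [E [H1 [H2 [Hu Hn]]]]]]] :=
  walk_lastP (fun x => x <> v /\ dominates src tgt s x v) Hp.
have [Huv Hdom] : u <> v /\ dominates src tgt s u v.
  case: Hu => [//|[_ ->]]; split; first by move=> H; apply: Hvs.
  exact: dom_from_s.
exists u, p1; split; last split => //.
  split => //; split => //; split => //.
  move=> x Hxv Hx q Hq.
  have := Hx _ (walk_cat Hq H2); rewrite /walk_verts map_cat /= in_cons mem_cat.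
  case/orP => [/eqP ->|/orP [H|H]]; first by rewrite /walk_verts mem_head.
    by rewrite /walk_verts in_cons H orbT.
  by case: (Hn _ H).
rewrite E size_cat; case: p2 H2 Hn {E} => [/= H|e p2 _ _].
  by case: Huv.
by rewrite /= addnS ltnS leq_addr.
Qed.

Lemma dom_antisym (V Ed : finType) (src tgt : Ed -> V) s a b :
  strongly_connected src tgt ->
  dominates src tgt s a b -> dominates src tgt s b a -> a = b.
Proof.
move=> SC Hab Hba.
case: (eqVneq a b) => // Hne.
have [p Hp] := SC s b.
have [p1 [H1 H2]] := walk_first Hp.
have [q1 [q2 [E [Q1 Q2]]]] := walk_split H1 (Hab _ H1).
have Hq2 : q2 <> [::] by move=> Hq; rewrite Hq /= in Q2; rewrite Q2 eqxx in Hne.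
by have := H2 _ _ E Hq2; rewrite (Hba _ Q1).
Qed.

Lemma subtree_root (V Ed : finType) (src tgt : Ed -> V) s n v p :
  size p < n -> walk src tgt s p v ->
  exists r, (r = s \/ marked src tgt s r) /\ dominates src tgt s r v /\
    (forall x, marked src tgt s x -> dominates src tgt s x v -> dominates src tgt s x r) /\
    same_subtree src tgt s v r.
Proof.
elim: n v p => [//|n IH] v p Hn Hp.
case: (eqVneq v s) => [->|Hvs].
  exists s; split; first by left. split; first exact: dom_refl.
  split=> //. exact: rst_refl.
case: (classic (marked src tgt s v)) => Hm.
  exists v; split; first by right. split; first exact: dom_refl.
  split=> //. exact: rst_refl.
have [u [p1 [Hid [H1 Hs]]]] := idom_ex (elimN eqP Hvs) Hp.
have [r [Hr [Hdr [Hall Hst]]]] := IH u p1 (leq_trans Hs Hn) H1.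
exists r; split=> //; split.
  by apply: dom_trans Hdr _; case: Hid => _ [_ []].
split.
  move=> x Hx Hxv; apply: Hall => //.
  case: Hid => _ [_ [_ Hi]]; apply: Hi => // E; subst x; exact: Hm.
apply: rst_trans Hst; apply: rst_sym; apply: rst_step; split=> //.
Qed.

Lemma bridge_arg (V Ed : finType) (src tgt : Ed -> V) s r v w :
  marked src tgt s r -> dominates src tgt s r v -> two_edge_paths src tgt w v ->
  dominates src tgt s r w.
Proof.
move=> [_ [u [e [_ [_ [Ht Hb]]]]]] Hrv [q1 [q2 [Q1 [Q2 Hd]]]] p Hp.
case Hin: (r \in walk_verts tgt s p) => //.
have inq : forall q, walk src tgt w q v -> e \in q.
  move=> q Hq; have Hpq := walk_cat Hp Hq.
  have [a1 [a2 [E [A1 _]]]] := walk_split Hpq (Hrv _ Hpq).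
  rewrite -Ht in A1; have := Hb _ A1 => Ha.
  have : e \in p ++ q by rewrite E mem_cat Ha.
  rewrite mem_cat => /orP [He|//].
  have : r \in walk_verts tgt s p by rewrite /walk_verts in_cons -Ht (map_f tgt He) orbT.
  by rewrite Hin.
by have := Hd _ (inq _ Q1); rewrite (inq _ Q2).
Qed.

Lemma two_conn_subtree (V Ed : finType) (src tgt : Ed -> V) s v w :
  strongly_connected src tgt -> two_edge_conn src tgt v w -> same_subtree src tgt s v w.
Proof.
move=> SC [->|[Hvw Hwv]]; first exact: rst_refl.
have [pv Hpv] := SC s v; have [pw Hpw] := SC s w.
have [rv [Rv [Dv [Av Sv]]]] := subtree_root (ltnSn _) Hpv.
have [rw [Rw [Dw [Aw Sw]]]] := subtree_root (ltnSn _) Hpw.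
suff E : rv = rw.
  subst rw; apply: rst_trans Sv _; exact: rst_sym.
case: Rv => [Ev|Mv]; case: Rw => [Ew|Mw].
- by rewrite Ev Ew.
- have := Av _ Mw (bridge_arg Mw Dw Hvw); rewrite Ev => /dom_s Hs.
  by case: Mw.
- have := Aw _ Mv (bridge_arg Mv Dv Hwv); rewrite Ew => /dom_s Hs.
  by case: Mv.
- apply: dom_antisym SC _ _.
  + exact: Aw _ Mv (bridge_arg Mv Dv Hwv).
  + exact: Av _ Mw (bridge_arg Mw Dw Hvw).
Qed.

Lemma walk_rev (V Ed : finType) (src tgt : Ed -> V) a p b :
  walk src tgt a p b -> walk tgt src b (rev p) a.
Proof.
elim: p a => [|e p IH] a /=; first by move=> ->.
move=> [He Hw]; rewrite rev_cons -cats1; apply: walk_cat (IH _ Hw) _.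
by rewrite /=; split.
Qed.

Lemma two_paths_rev (V Ed : finType) (src tgt : Ed -> V) v w :
  two_edge_paths src tgt v w -> two_edge_paths tgt src w v.
Proof.
move=> [p [q [P [Q D]]]]; exists (rev p), (rev q); split; first exact: walk_rev.
split; first exact: walk_rev.
by move=> e; rewrite !mem_rev; apply: D.
Qed.

Theorem mainTheorem5 (V Ed : finType) (src tgt : Ed -> V) (s : V) :
  strongly_connected src tgt ->
  forall v w : V, two_edge_conn src tgt v w ->
    same_subtree src tgt s v w /\ same_subtree tgt src s v w.
Proof.
move=> SC v w H; split; first exact: two_conn_subtree.
apply: two_conn_subtree.
  move=> a b; have [p Hp] := SC b a; exists (rev p); exact: walk_rev.
case: H => [->|[H1 H2]]; first by left.
by right; split; apply: two_paths_rev.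
Qed.
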